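(* Let $G$ be a graph and $n\ge1$, and let $\eta:G^n\to G^{(n)}$ be the graph map $\eta(v_1,\dots,v_n)=\prod_{i=1}^n v_i$. Then the induced homomorphism $\eta^*:H_1(G^n)\to H_1(G^{(n)})$, given on cycles by $\eta^*([C])=[\eta(C)]$, is surjective.
   Context: All graphs are connected, simple and locally finite. $G^n$ is the Cartesian (box) product graph. $G^{(n)}$ is the $n$th reduced power: vertices are degree-$n$ monomials in vertices of $G$, adjacent iff they differ by moving one token along one edge of $G$ (equivalently, the quotient of $G^n$ by $\Sigma_n$). For a graph $K$ with ordered vertices, $C_1(K)$ is the free abelian group on edges $w_iw_j$ ($i<j$), $[w_i,w_j]$ equals $w_iw_j$, $-w_jw_i$ or $0$ according as $i<j$, $i>j$, $i=j$, and for a path $P=(p_0,\dots,p_\ell)$, $[P]=\sum_i[p_i,p_{i+1}]$. $H_1(K)$ is the subgroup of $C_1(K)$ generated by $[C]$ for cycles $C$. A graph map $f$ induces $f^*:C_1\to C_1$ by $[u,v]\mapsto[f(u),f(v)]$. *)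

(* Defs.v *)
From HB Require Import structures.
From mathcomp Require Import all_boot all_order all_algebra.
From mathcomp Require Import finmap multiset.
Set Implicit Arguments. Unset Strict Implicit. Unset Printing Implicit Defensive.
Import GRing.Theory Num.Theory.
Local Open Scope ring_scope.

Fixpoint is_walk (K : Type) (adj : K -> K -> Prop) (p : seq K) : Prop :=
  match p with
  | x :: ((y :: _) as q) => adj x y /\ is_walk adj q
  | _ => True
  end.

Definition is_cycle (K : eqType) (adj : K -> K -> Prop) (p : seq K) : Prop :=
  match p with
  | [::] => False
  | x :: q => (3 <= size q)%N /\ last x q = x /\ uniq q /\ is_walk adj p
  end.

Definition graph_connected (V : Type) (adj : V -> V -> Prop) : Prop :=
  forall u v : V, exists p : seq V, is_walk adj (u :: p) /\ last u p = v.

Definition locally_finite (V : eqType) (adj : V -> V -> Prop) : Prop :=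
  forall v : V, exists s : seq V, forall w, adj v w -> w \in s.

(* A 1-chain is a formal finite Z-combination of symbols [u,v]
   (a list of (coefficient, u, v)).  Two chains are identified when they
   have the same coefficient on every oriented pair, where [u,v] = -[v,u]
   and [w,w] = 0; this is C_1(K) (canonically, independent of the vertex
   order: w_i w_j with i<j corresponds to [w_i,w_j]). *)
Definition chain (K : Type) := seq (int * K * K).

Definition chain_eval (K : eqType) (c : chain K) (x y : K) : int :=
  \sum_(t <- c) t.1.1 * (((t.1.2 == x) && (t.2 == y))%:R
                         - ((t.2 == x) && (t.1.2 == y))%:R).

Definition chain_eqv (K : eqType) (c d : chain K) : Prop :=
  forall x y : K, chain_eval c x y = chain_eval d x y.

Definition scale_chain (K : Type) (k : int) (c : chain K) : chain K :=
  [seq (k * t.1.1, t.1.2, t.2) | t <- c].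

Definition path_chain (K : Type) (p : seq K) : chain K :=
  [seq (1%R, a.1, a.2) | a <- zip p (behead p)].

Definition in_H1 (K : eqType) (adj : K -> K -> Prop) (c : chain K) : Prop :=
  exists l : seq (int * seq K),
    (forall kC, kC \in l -> is_cycle adj kC.2) /\
    chain_eqv c (flatten [seq scale_chain kC.1 (path_chain kC.2) | kC <- l]).

Definition pushforward (K L : Type) (f : K -> L) (c : chain K) : chain L :=
  [seq (t.1.1, f t.1.2, f t.2) | t <- c].

Definition boxpow_adj (V : Type) (adj : V -> V -> Prop) (n : nat)
  (s t : n.-tuple V) : Prop :=
  exists i : 'I_n, adj (tnth s i) (tnth t i) /\
    forall j : 'I_n, j != i -> tnth s j = tnth t j.

Local Open Scope mset_scope.
(* degree-n monomials in the vertices of G = multisets of size n *)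
Definition redpow (V : choiceType) (n : nat) :=
  {m : {mset V} | size m == n}.

Definition redpow_adj (V : choiceType) (adj : V -> V -> Prop) (n : nat)
  (m m' : redpow V n) : Prop :=
  exists u v : V, adj u v /\ u \in (val m : seq V) /\
    val m' = (val m `\ u) `+` [mset v].

Lemma eta_size (V : choiceType) (n : nat) (t : n.-tuple V) :
  size (seq_mset (tval t)) == n.
Proof. by rewrite (perm_size (perm_eq_seq_mset _)) size_tuple. Qed.

Definition eta_map (V : choiceType) (n : nat) (t : n.-tuple V) : redpow V n :=
  exist _ (seq_mset (tval t)) (eta_size t).

(* Main.v *)
Require Import Defs.
From HB Require Import structures.
From mathcomp Require Import all_boot all_order all_algebra all_fingroup.
From mathcomp Require Import finmap multiset zify.
Set Implicit Arguments. Unset Strict Implicit. Unset Printing Implicit Defensive.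
Import GRing.Theory Num.Theory.
Local Open Scope ring_scope.

Section Gen.
Variable K : eqType.
Implicit Types (c d : chain K) (x y : K).

Lemma eval_cat c d a b : chain_eval (c ++ d) a b = chain_eval c a b + chain_eval d a b.
Proof. by rewrite /chain_eval big_cat. Qed.

Lemma eval_nil a b : chain_eval ([::] : chain K) a b = 0.
Proof. by rewrite /chain_eval big_nil. Qed.

Lemma eval_scale k c a b : chain_eval (scale_chain k c) a b = k * chain_eval c a b.
Proof.
rewrite /chain_eval big_map big_distrr; apply: eq_bigr => t _ /=; by rewrite mulrA.
Qed.

Lemma eval_flat (l : seq (int * seq K)) a b :
  chain_eval (flatten [seq scale_chain kC.1 (path_chain kC.2) | kC <- l]) a b
  = \sum_(kC <- l) kC.1 * chain_eval (path_chain kC.2) a b.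
Proof.
elim: l => [|kC l IH]; first by rewrite big_nil eval_nil.
by rewrite /= eval_cat IH eval_scale big_cons.
Qed.

Variable adj : K -> K -> Prop.

Lemma H1_eqv c d : in_H1 adj c -> chain_eqv c d -> in_H1 adj d.
Proof. move=> [l [Hl He]] Hcd; exists l; split=> // a b; by rewrite -(Hcd a b) He. Qed.

Lemma H1_zero c : (forall a b, chain_eval c a b = 0) -> in_H1 adj c.
Proof. move=> H; exists [::]; split=> [kC|a b]; [by rewrite in_nil | by rewrite H eval_nil]. Qed.

Lemma H1_cat c d : in_H1 adj c -> in_H1 adj d -> in_H1 adj (c ++ d).
Proof.
move=> [l1 [H1 E1]] [l2 [H2 E2]]; exists (l1 ++ l2); split.
  by move=> kC; rewrite mem_cat => /orP [/H1|/H2].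
by move=> a b; rewrite map_cat flatten_cat !eval_cat E1 E2.
Qed.

Lemma H1_scale k c : in_H1 adj c -> in_H1 adj (scale_chain k c).
Proof.
move=> [l [Hl E]]; exists [seq (k * kC.1, kC.2) | kC <- l]; split.
  by move=> kC /mapP [kC' /Hl H ->].
move=> a b; rewrite eval_scale E !eval_flat big_map big_distrr.
by apply: eq_bigr => kC _ /=; rewrite mulrA.
Qed.

Lemma pc_cat x q q' :
  path_chain (x :: q ++ q') = path_chain (x :: q) ++ path_chain (last x q :: q').
Proof.
elim: q x => [|y q IH] x //=.
by rewrite -IH.
Qed.

Lemma walk_cat x q q' :
  is_walk adj (x :: q ++ q') <-> is_walk adj (x :: q) /\ is_walk adj (last x q :: q').
Proof.
elim: q x => [|y q IH] x; first by simpl; tauto.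
change (adj x y /\ is_walk adj (y :: q ++ q') <-> (adj x y /\ is_walk adj (y :: q)) /\ is_walk adj (last y q :: q')).
rewrite IH; tauto.
Qed.

Lemma nuniq_split (q : seq K) : ~~ uniq q -> exists q1 y q2 q3, q = q1 ++ y :: q2 ++ y :: q3.
Proof.
elim: q => [|z r IH] //=; case Hz: (z \in r) => /=.
  move=> _; case/splitPr: Hz => r1 r2; by exists [::], z, r1, r2.
move=> /IH [q1 [y [q2 [q3 ->]]]]; by exists (z :: q1), y, q2, q3.
Qed.

Lemma closed_H1 x q : is_walk adj (x :: q) -> last x q = x -> in_H1 adj (path_chain (x :: q)).
Proof.
have [m] := ubnP (size q); elim: m x q => // m IH x q Hsz Hw Hl.
case Hu: (uniq q).
  case: (leqP 3 (size q)) => h.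
    exists [:: (1, x :: q)]; split.
      by move=> kC; rewrite inE => /eqP -> /=.
    by move=> a b; rewrite eval_flat big_seq1 mul1r.
  apply: H1_zero => a b.
  case: q Hsz Hw Hl Hu h => [|y [|z [|w q]]] //= _ _.
  - by move=> *; rewrite eval_nil.
  - by move=> <- _ _; rewrite /chain_eval big_cons big_nil subrr mulr0 addr0.
  - move=> -> _ _; rewrite /chain_eval !big_cons big_nil !mul1r addr0.
    by rewrite addrA subrK subrr.
move/negbT: Hu => /nuniq_split [q1 [y [q2 [q3 Eq]]]].
have -> : q = (q1 ++ [:: y]) ++ (q2 ++ [:: y]) ++ q3 by rewrite Eq -!catA.
move: Hw Hl Hsz; rewrite Eq => Hw Hl Hsz.
have E2 : q1 ++ y :: q2 ++ y :: q3 = (q1 ++ [:: y]) ++ (q2 ++ [:: y]) ++ q3 by rewrite -!catA.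
rewrite E2 in Hw Hl Hsz.
have Ly z s : last z (s ++ [:: y]) = y by rewrite cats1 last_rcons.
move: Hw => /walk_cat [W1]; rewrite Ly => /walk_cat [W2]; rewrite Ly => W3.
move: Hl; rewrite last_cat Ly last_cat Ly => Hl.
have HA : in_H1 adj (path_chain (y :: q2 ++ [:: y])).
  apply: IH; last by rewrite Ly.
    move: Hsz; rewrite !size_cat /= => Hsz; rewrite ?size_cat /=; lia.
  exact: W2.
have HB : in_H1 adj (path_chain (x :: (q1 ++ [:: y]) ++ q3)).
  apply: IH; last by rewrite last_cat Ly.
    move: Hsz; rewrite !size_cat /= => Hsz; rewrite ?size_cat /=; lia.
  by apply/walk_cat; split; last by rewrite Ly.
move: HB; rewrite pc_cat Ly => HB.
rewrite pc_cat Ly (pc_cat y) Ly.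
apply: H1_eqv (H1_cat HA HB) _ => a b.
rewrite !eval_cat; by rewrite addrCA.
Qed.

End Gen.

Lemma walk_rev (K : eqType) (adj : K -> K -> Prop) (Hs : forall u v, adj u v -> adj v u) a r :
  is_walk adj (a :: r) -> exists r', is_walk adj (last a r :: r') /\ last (last a r) r' = a /\
    forall (L : eqType) (f : K -> L) u v,
      chain_eval (path_chain (map f (last a r :: r'))) u v
      = - chain_eval (path_chain (map f (a :: r))) u v.
Proof.
elim: r a => [|c r0 IH] a.
  move=> _; exists [::]; split=> //; split=> // L f u v; by rewrite /= /chain_eval big_nil oppr0.
move=> [Hac Hw]; have [r'0 [W0 [L0 E0]]] := IH c Hw.
exists (r'0 ++ [:: a]); rewrite [last a _]/=; split.
  apply/walk_cat; split=> //; rewrite L0 /=; split=> //; exact: Hs.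
split; first by rewrite cats1 last_rcons.
move=> L f u v; rewrite [map f (_ :: _)]/= map_cat pc_cat last_map L0 eval_cat.
rewrite (_ : path_chain (f (last c r0) :: map f r'0) = path_chain (map f (last c r0 :: r'0))) // E0.
rewrite /= /chain_eval !big_cons big_nil /=.
rewrite !mul1r addr0 opprD; rewrite addrC; congr (_ + _).
by rewrite opprB.
Qed.


Lemma pc_map (K L : Type) (f : K -> L) p :
  pushforward f (path_chain p) = path_chain (map f p).
Proof. elim: p => [|x [|y p] IH] //=. by move: IH => /= ->. Qed.

Section Main.
Variables (V : choiceType) (adj : rel V) (n : nat).
Hypothesis adj_sym : symmetric adj.
Hypothesis G_conn : graph_connected adj.

Definition badj := @boxpow_adj V adj n.
Definition radj := @redpow_adj V adj n.
Notation eta := (@eta_map V n).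

Definition upd (s : n.-tuple V) (i : 'I_n) (y : V) : n.-tuple V :=
  [tuple (if k == i then y else tnth s k) | k < n].
Definition permt (s : n.-tuple V) (p : 'S_n) : n.-tuple V := [tuple tnth s (p k) | k < n].

Lemma tnth_upd s i y k : tnth (upd s i y) k = if k == i then y else tnth s k.
Proof. by rewrite tnth_mktuple. Qed.

Lemma eta_perm s p : eta (permt s p) = eta s.
Proof.
apply: val_inj => /=; apply/eq_seq_msetP; apply/tuple_permP; by exists p.
Qed.

Lemma eta_perm_inv s t : eta s = eta t -> exists p, t = permt s p.
Proof.
move/(congr1 val) => /= /eq_seq_msetP; rewrite perm_sym => /tuple_permP [p Hp].
by exists p; apply: val_inj.
Qed.

Lemma permt1 s : permt s 1 = s.
Proof. by apply: eq_from_tnth => k; rewrite tnth_mktuple perm1. Qed.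

Lemma permtM s (a b : 'S_n) : permt s (a * b) = permt (permt s b) a.
Proof. by apply: eq_from_tnth => k; rewrite !tnth_mktuple permM. Qed.

Lemma walk_upd s i a r : is_walk adj (a :: r) -> is_walk badj (upd s i a :: map (upd s i) r).
Proof.
elim: r a => [|c r IH] a //= [Hac Hw]; split; last exact: IH.
exists i; rewrite !tnth_upd eqxx; split=> // j Hj; by rewrite !tnth_upd (negbTE Hj).
Qed.

Definition Z s t := exists q, is_walk badj (s :: q) /\ last s q = t /\
  forall x y, chain_eval (path_chain (map eta (s :: q))) x y = 0.

Lemma Z_refl s : Z s s.
Proof. exists [::]; split=> //; split=> // x y; by rewrite /chain_eval big_nil. Qed.

Lemma Z_trans s t u : Z s t -> Z t u -> Z s u.
Proof.
move=> [q1 [W1 [L1 E1]]] [q2 [W2 [L2 E2]]]; exists (q1 ++ q2); split.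
  by apply/walk_cat; rewrite L1.
split; first by rewrite last_cat L1.
move=> x y; rewrite [map eta (s :: _)]/= map_cat pc_cat last_map L1 eval_cat.
by rewrite -[path_chain (eta s :: _)]/(path_chain (map eta (s :: q1))) E1 -[path_chain (eta t :: _)]/(path_chain (map eta (t :: q2))) E2 addr0.
Qed.

Lemma Z_swap s (i j : 'I_n) : i != j -> Z s (permt s (tperm i j)).
Proof.
move=> Hij; set a := tnth s i; set b := tnth s j.
have [r [Wr Lr]] := G_conn a b.
have Hsy : forall u v, adj u v -> adj v u by move=> u v; rewrite adj_sym.
have [r' [Wr' [Lr' Er']]] := walk_rev Hsy Wr.
rewrite Lr in Wr' Lr' Er'.
set s' := upd s i b.
have Hs : upd s i a = s.
  by apply: eq_from_tnth => k; rewrite tnth_upd; case: eqP => [->|].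
have Hs' : upd s' j b = s'.
  apply: eq_from_tnth => k; rewrite !tnth_upd; case: eqP => [->|//].
  by rewrite eq_sym (negbTE Hij).
have Hf : forall y, eta (upd s' j y) = eta (upd s i y).
  move=> y; rewrite -(eta_perm (upd s i y) (tperm i j)); congr eta.
  apply: eq_from_tnth => k; rewrite !tnth_upd tnth_mktuple tnth_upd.
  case: (eqVneq k j) => [->|Hkj]; first by rewrite tpermR eqxx.
  case: (eqVneq k i) => [->|Hki]; first by rewrite tpermL eq_sym (negbTE Hij).
  by rewrite tpermD; [rewrite (negbTE Hki) | rewrite eq_sym | rewrite eq_sym].
exists (map (upd s i) r ++ map (upd s' j) r'); split.
  apply/walk_cat; split; first by rewrite -{1}Hs; exact: walk_upd.
  rewrite -{1}Hs last_map Lr -/s' -{1}Hs'; exact: walk_upd.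
split.
  rewrite last_cat -{1}Hs last_map Lr -/s' -{1}Hs' last_map Lr'.
  apply: eq_from_tnth => k; rewrite !tnth_upd tnth_mktuple.
  case: (eqVneq k j) => [->|Hkj]; first by rewrite tpermR.
  case: (eqVneq k i) => [->|Hki]; first by rewrite tpermL.
  by rewrite tpermD 1?eq_sym.
move=> x y.
rewrite -{1}Hs [map eta (upd s i a :: _)]/= map_cat -!map_comp.
rewrite (eq_map (g := eta \o upd s i) (fun y => Hf y)).
rewrite -[eta (upd s i a)]/((eta \o upd s i) a) pc_cat last_map Lr eval_cat.
have E := Er' _ (eta \o upd s i) x y.
rewrite [map _ (b :: r')]/= in E; rewrite E.
rewrite (_ : path_chain ((eta \o upd s i) a :: map (eta \o upd s i) r) = path_chain (map (eta \o upd s i) (a :: r))) //.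
by rewrite subrr.
Qed.

Lemma Z_perm_prod (ts : seq ('I_n * 'I_n)) : all dpair ts ->
  forall s, Z s (permt s (\prod_(t <- ts) tperm t.1 t.2)).
Proof.
elim: ts => [|t ts IH] /=; first by move=> _ s; rewrite big_nil permt1; exact: Z_refl.
move=> /andP [Ht Hts] s; rewrite big_cons permtM.
apply: Z_trans (IH Hts s) _; exact: Z_swap.
Qed.

Lemma Z_perm s p : Z s (permt s p).
Proof. have [ts -> Hts] := prod_tpermP p; exact: Z_perm_prod. Qed.

Lemma count_tuple (t : n.-tuple V) a :
  count_mem a t = \sum_(k < n) (if tnth t k == a then 1 else 0)%N.
Proof. by rewrite -sum1_count big_tuple big_mkcond. Qed.

Lemma lift_step t m' : radj (eta t) m' -> exists t', badj t t' /\ eta t' = m'.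
Proof.
move=> [u [v [Huv [Hu Hm]]]].
have Hu' : u \in tval t by rewrite -(perm_mem (perm_eq_seq_mset t)).
case/tnthP: Hu' => i Hi.
exists (upd t i v); split.
  exists i; rewrite !tnth_upd eqxx -Hi; split=> // j Hj; by rewrite tnth_upd (negbTE Hj).
apply: val_inj; rewrite Hm -[val (eta (upd t i v))]/(seq_mset (upd t i v)).
rewrite -[val (eta t)]/(seq_mset t).
apply/msetP => a.
rewrite mset_seqE msetE2 msetB1E msetnE mset_seqE !count_tuple.
rewrite (bigD1 i) // [X in _ = (X - _ + _)%N](bigD1 i) // tnth_upd eqxx -Hi.
set S1 := \sum_(k < n | _) _; set S2 := \sum_(k < n | _) _.
have -> : S1 = S2.
  apply: eq_bigr => k /andP [_ Hk]; by rewrite tnth_upd (negbTE Hk).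
rewrite !(eq_sym a); case: (u == a); case: (v == a); rewrite /=; lia.
Qed.

Lemma lift_walk q : forall x t, eta t = x -> is_walk radj (x :: q) ->
  exists q', is_walk badj (t :: q') /\ map eta q' = q.
Proof.
elim: q => [|y q IH] x t Ht; first by exists [::].
move=> [Hxy Hw]; rewrite -Ht in Hxy.
have [t' [Htt' Ht']] := lift_step Hxy.
have [q' [W E]] := IH y t' Ht' Hw.
by exists (t' :: q'); split; [split | rewrite /= Ht' E].
Qed.

Lemma pf_scale k (c : chain (n.-tuple V)) :
  pushforward eta (scale_chain k c) = scale_chain k (pushforward eta c).
Proof. by rewrite /pushforward /scale_chain -!map_comp; apply: eq_map; case=> [[]]. Qed.

Lemma cycle_lift C : is_cycle radj C ->
  exists d, in_H1 badj d /\ chain_eqv (pushforward eta d) (path_chain C).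
Proof.
case: C => [|x q] //= [_ [Hl [_ Hw]]].
have Ht : eta (Tuple (valP x)) = x by apply: val_inj => /=; exact: seq_mset_id.
set t := Tuple (valP x) in Ht.
have [q' [W E]] := lift_walk Ht Hw.
have Hlast : eta (last t q') = eta t by rewrite -last_map E Ht Hl.
have [p Hp] := eta_perm_inv Hlast.
have [w [Ww [Lw Ew]]] := Z_perm (last t q') p.
rewrite -Hp in Lw.
exists (path_chain (t :: q' ++ w)); split.
  apply: closed_H1; last by rewrite last_cat Lw.
  by apply/walk_cat; split.
move=> a b; rewrite pc_map [map eta (t :: _)]/= map_cat Ht E pc_cat Hl eval_cat.
have := Ew a b; rewrite [map eta (_ :: w)]/= Hlast Ht => ->; by rewrite addr0.
Qed.

End Main.

Theorem lemma4p3 (V : choiceType) (adj : rel V)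
  (adj_sym : symmetric adj) (adj_irr : irreflexive adj)
  (G_conn : graph_connected adj) (G_lf : locally_finite adj)
  (n : nat) (n_ge1 : (1 <= n)%N) :
  forall c : chain (redpow V n),
    in_H1 (@redpow_adj V adj n) c ->
    exists d : chain (n.-tuple V),
      in_H1 (@boxpow_adj V adj n) d /\
      chain_eqv (pushforward (@eta_map V n) d) c.
Proof.
move=> c [l [Hl Hc]].
have : exists d, in_H1 (@boxpow_adj V adj n) d /\ forall a b,
    chain_eval (pushforward (@eta_map V n) d) a b
    = chain_eval (flatten [seq scale_chain kC.1 (path_chain kC.2) | kC <- l]) a b.
  elim: l Hl {Hc} => [|kC l IH] Hl.
    by exists [::]; split=> //; apply: H1_zero => a b; rewrite eval_nil.
  have [dC [HdC EdC]] := cycle_lift adj_sym G_conn (Hl kC (mem_head _ _)).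
  have [d [Hd Ed]] : exists d, in_H1 (@boxpow_adj V adj n) d /\ forall a b,
    chain_eval (pushforward (@eta_map V n) d) a b
    = chain_eval (flatten [seq scale_chain kC.1 (path_chain kC.2) | kC <- l]) a b.
    by apply: IH => k Hk; apply: Hl; rewrite inE Hk orbT.
  exists (scale_chain kC.1 dC ++ d); split.
    by apply: H1_cat => //; apply: H1_scale.
  move=> a b; rewrite /pushforward map_cat -/(pushforward _ _) -/(pushforward _ _).
  by rewrite pf_scale /= !eval_cat !eval_scale EdC Ed.
move=> [d [Hd Ed]]; exists d; split=> // a b; by rewrite Ed Hc.
Qed.
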